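(* Suppose that $\xi(0)\ge4d$. Then for every $t\ge0$, \[P^\xi\Big(N(0,t)<\tfrac12e^{(\xi(0)-2d)t}\Big)\le\frac{15}{16}.\]
   Context: $(\xi(z))_{z\in\mathbb{Z}^d}$ is a fixed non-negative potential. $P^\xi$ is the law of the branching random walk started with a single particle at the origin: each particle performs a continuous-time simple symmetric random walk on $\mathbb{Z}^d$ (jumping to each of its $2d$ neighbours at rate $1$), and a particle at site $z$ splits into two particles at rate $\xi(z)$, the offspring behaving independently in the same way. $N(z,t)$ denotes the number of particles at site $z$ at time $t$. *)

(* Defs.v *)
(* Law of the branching random walk (BRW) on Z^d
   described as the (minimal) continuous-time Markov chain on particle
   configurations, via the jump-chain / backward integral-equation expansion. *)
From Stdlib Require Import Reals Lra ZArith List.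
From Coquelicot Require Import Coquelicot.
Import ListNotations.
Open Scope R_scope.

Definition site := list Z.
Definition origin (d : nat) : site := repeat 0%Z d.

Fixpoint addk (p : site) (k : nat) (v : Z) : site :=
  match p, k with
  | nil, _ => nil
  | a :: p', O => (a + v)%Z :: p'
  | a :: p', S k' => a :: addk p' k' v
  end.

(* configuration = list of positions of the (labelled) particles *)
Definition config := list site.

Fixpoint replace_nth (x : config) (i : nat) (b : site) : config :=
  match x, i with
  | nil, _ => nil
  | _ :: x', O => b :: x'
  | a :: x', S i' => a :: replace_nth x' i' b
  end.

(* All possible transitions out of configuration x, with their rates:
   particle i at p jumps to each of its 2d neighbours at rate 1, and
   splits into two particles (a new particle is added at p) at rate xi p. *)
Definition moves (d : nat) (xi : site -> R) (x : config) : list (R * config) :=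
  flat_map (fun i =>
    let p := nth i x nil in
    (xi p, x ++ [p]) ::
    flat_map (fun k => [(1, replace_nth x i (addk p k 1%Z));
                        (1, replace_nth x i (addk p k (-1)%Z))]) (seq 0 d))
  (seq 0 (length x)).

Definition qrate (d : nat) (xi : site -> R) (x : config) : R :=
  fold_right Rplus 0 (map fst (moves d xi x)).

(* jprob n t x = probability that the chain started at x has made exactly
   n jumps by time t and its state at time t satisfies E. *)
Fixpoint jprob (d : nat) (xi : site -> R) (E : config -> bool) (n : nat)
  (t : R) (x : config) {struct n} : R :=
  match n with
  | O => if E x then exp (- qrate d xi x * t) else 0
  | S m => RInt (fun s => exp (- qrate d xi x * s) *
             fold_right Rplus 0
               (map (fun rz => fst rz * jprob d xi E m (t - s) (snd rz))
                    (moves d xi x))) 0 t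
  end.

Definition brw_prob (d : nat) (xi : site -> R) (E : config -> bool) (t : R) : R :=
  Series (fun n => jprob d xi E n t [origin d]).

Definition Ncount (z : site) (x : config) : nat :=
  count_occ (list_eq_dec Z.eq_dec) x z.

Definition Rltb (a b : R) : bool := if Rlt_dec a b then true else false.

(* Main.v *)
Require Import Defs.
From Stdlib Require Import Reals Lra Lia ZArith List.
From Coquelicot Require Import Coquelicot.
Import ListNotations.
Open Scope R_scope.

Definition fsum (l : list R) : R := fold_right Rplus 0 l.

Lemma fsum_app l1 l2 : fsum (l1 ++ l2) = fsum l1 + fsum l2.
Proof. induction l1; simpl; unfold fsum in *; simpl; try rewrite IHl1; lra. Qed.

Lemma fsum_flat_map {A B : Type} (f : B -> R) (g : A -> list B) (l : list A) :
  fsum (map f (flat_map g l)) = fsum (map (fun i => fsum (map f (g i))) l).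
Proof.
  induction l; simpl. reflexivity.
  rewrite map_app, fsum_app, IHl. reflexivity.
Qed.

Lemma fsum_le {A : Type} (f g : A -> R) (l : list A) :
  (forall a, In a l -> f a <= g a) -> fsum (map f l) <= fsum (map g l).
Proof.
  induction l; simpl; intros H. lra.
  unfold fsum in *; simpl. apply Rplus_le_compat. apply H; auto.
  apply IHl; auto.
Qed.

Lemma fsum_ext {A : Type} (f g : A -> R) (l : list A) :
  (forall a, In a l -> f a = g a) -> fsum (map f l) = fsum (map g l).
Proof.
  induction l; simpl; intros H. lra.
  unfold fsum in *; simpl. rewrite H by auto. rewrite IHl; auto.
Qed.

Lemma fsum_const {A : Type} (c : R) (l : list A) :
  fsum (map (fun _ => c) l) = INR (length l) * c.
Proof.
  induction l. unfold fsum; simpl; lra.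
  unfold fsum in *. cbn [map fold_right length]. rewrite S_INR, IHl. lra.
Qed.

Lemma fsum_nth (f : site -> R) (x : config) :
  fsum (map (fun i => f (nth i x nil)) (seq 0 (length x))) = fsum (map f x).
Proof.
  induction x; simpl. reflexivity.
  unfold fsum in *; simpl. f_equal. rewrite <- seq_shift, map_map. simpl. exact IHx.
Qed.

Definition sdec := list_eq_dec Z.eq_dec.

Lemma count_cons (a : site) l o :
  count_occ sdec (a :: l) o = (count_occ sdec l o + (if sdec a o then 1 else 0))%nat.
Proof. destruct (sdec a o) as [e|e].
  - rewrite (count_occ_cons_eq _ _ e). cbv beta iota. lia.
  - rewrite (count_occ_cons_neq _ _ e). cbv beta iota. lia. Qed.

Lemma count_replace (x : config) i b o : (i < length x)%nat ->
  (count_occ sdec (replace_nth x i b) o + (if sdec (nth i x nil) o then 1 else 0) =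
   count_occ sdec x o + (if sdec b o then 1 else 0))%nat.
Proof.
  revert i; induction x as [|a x IH]; intros i Hi; simpl in Hi. lia.
  destruct i as [|i]; cbn [replace_nth nth]; rewrite !count_cons.
  - lia.
  - specialize (IH i ltac:(lia)). lia.
Qed.

Lemma count_app1 (x : config) p o :
  count_occ sdec (x ++ [p]) o = (count_occ sdec x o + (if sdec p o then 1 else 0))%nat.
Proof.
  rewrite count_occ_app, count_cons. reflexivity.
Qed.

Definition blk (d : nat) (xi : site -> R) (x : config) (i : nat) : list (R * config) :=
  let p := nth i x nil in
    (xi p, x ++ [p]) ::
    flat_map (fun k => [(1, replace_nth x i (addk p k 1%Z));
                        (1, replace_nth x i (addk p k (-1)%Z))]) (seq 0 d).

Lemma moves_blk d xi x : moves d xi x = flat_map (blk d xi x) (seq 0 (length x)).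
Proof. reflexivity. Qed.

Lemma blk_rate d xi x i : fsum (map fst (blk d xi x i)) = xi (nth i x nil) + 2 * INR d.
Proof.
  unfold blk. cbn [map]. unfold fsum at 1. cbn [fold_right]. fold (fsum (map fst (flat_map
     (fun k : nat =>
      [(1, replace_nth x i (addk (nth i x nil) k 1));
       (1, replace_nth x i (addk (nth i x nil) k (-1)))]) (seq 0 d)))).
  rewrite fsum_flat_map.
  rewrite (fsum_ext _ (fun _ => 2)).
  2:{ intros a _. unfold fsum; simpl. lra. }
  rewrite fsum_const, length_seq. simpl. lra.
Qed.

Lemma blk_bound d xi (W : nat -> R) x i o :
  (i < length x)%nat -> (forall z, 0 <= xi z) ->
  (forall j k, (j <= k)%nat -> W k <= W j) ->
  fsum (map (fun rz => fst rz * W (count_occ sdec (snd rz) o)) (blk d xi x i)) <=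
  (if sdec (nth i x nil) o
   then xi (nth i x nil) * W (S (count_occ sdec x o)) + 2 * INR d * W (pred (count_occ sdec x o))
   else (xi (nth i x nil) + 2 * INR d) * W (count_occ sdec x o)).
Proof.
  intros Hi Hxi Hanti.
  set (p := nth i x nil). set (n := count_occ sdec x o).
  set (Wl := if sdec p o then W (pred n) else W n).
  unfold blk. fold p. cbn [map]. unfold fsum at 1. cbn [fold_right fst snd].
  match goal with |- context [fold_right Rplus 0 ?L] => change (fold_right Rplus 0 L) with (fsum L) end.
  rewrite fsum_flat_map.
  match goal with |- _ + fsum (map ?F ?L) <= _ =>
    assert (Hb : fsum (map F L) <= fsum (map (fun _ => 2 * Wl) L)) end.
  { apply fsum_le. intros k _. unfold fsum; cbn [map fold_right fst snd].
      assert (Hr : forall b, W (count_occ sdec (replace_nth x i b) o) <= Wl).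
      { intros b. pose proof (count_replace x i b o Hi) as Hc. fold p in Hc. fold n in Hc.
        unfold Wl. destruct (sdec p o); apply Hanti; destruct (sdec b o); lia. }
      pose proof (Hr (addk p k 1%Z)). pose proof (Hr (addk p k (-1)%Z)). lra. }
  rewrite fsum_const, length_seq in Hb.
  rewrite count_app1. fold n. unfold Wl in *.
  destruct (sdec p o).
  - replace (n + 1)%nat with (S n) by lia. lra.
  - replace (n + 0)%nat with n by lia. lra.
Qed.

Lemma qrate_sum d xi x : qrate d xi x = fsum (map (fun p => xi p + 2 * INR d) x).
Proof.
  unfold qrate. change (fold_right Rplus 0 (map fst (moves d xi x))) with (fsum (map fst (moves d xi x))).
  rewrite moves_blk, fsum_flat_map.
  rewrite (fsum_ext _ (fun i => xi (nth i x nil) + 2 * INR d)).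
  2:{ intros i _. apply blk_rate. }
  apply (fsum_nth (fun p => xi p + 2 * INR d)).
Qed.

Lemma sumB (xi : site -> R) (c Wn A : R) o (l : config) :
  fsum (map (fun p => if sdec p o then A else (xi p + c) * Wn) l) =
  fsum (map (fun p => xi p + c) l) * Wn + INR (count_occ sdec l o) * (A - (xi o + c) * Wn).
Proof.
  induction l as [|a l IH]. unfold fsum; simpl; lra.
  unfold fsum in *. cbn [map fold_right]. rewrite IH, count_cons.
  destruct (sdec a o) as [e|e].
  - subst. rewrite plus_INR. simpl. lra.
  - rewrite plus_INR. simpl. lra.
Qed.

Lemma moves_bound d xi (W : nat -> R) x o :
  (forall z, 0 <= xi z) ->
  (forall j k, (j <= k)%nat -> W k <= W j) ->
  fsum (map (fun rz => fst rz * W (count_occ sdec (snd rz) o)) (moves d xi x)) <=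
  qrate d xi x * W (count_occ sdec x o) +
  INR (count_occ sdec x o) * (xi o * (W (S (count_occ sdec x o)) - W (count_occ sdec x o))
    + 2 * INR d * (W (pred (count_occ sdec x o)) - W (count_occ sdec x o))).
Proof.
  intros Hxi Hanti.
  set (n := count_occ sdec x o).
  set (A := xi o * W (S n) + 2 * INR d * W (pred n)).
  rewrite moves_blk, fsum_flat_map.
  eapply Rle_trans.
  { apply (fsum_le _ (fun i => (fun p => if sdec p o then A else (xi p + 2 * INR d) * W n) (nth i x nil))).
    intros i Hi. apply in_seq in Hi.
    eapply Rle_trans. apply blk_bound; auto. lia.
    fold n. destruct (sdec (nth i x nil) o) as [e|e]. rewrite e. unfold A. lra. lra. }
  rewrite (fsum_nth (fun p => if sdec p o then A else (xi p + 2 * INR d) * W n)).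
  rewrite sumB, qrate_sum. fold n. unfold A. lra.
Qed.


Definition Ee (lam mu t : R) := exp (-(lam - mu) * t).
Definition den (lam mu s t : R) := lam * (1 - s) - Ee lam mu t * (mu - lam * s).
Definition pp (lam mu s t : R) := (mu * (1 - s) - Ee lam mu t * (mu - lam * s)) / den lam mu s t.
Definition rr (lam mu s t : R) := (lam - mu) ^ 2 * Ee lam mu t / (den lam mu s t) ^ 2.

Lemma Ee_bounds lam mu t : mu < lam -> 0 <= t -> 0 < Ee lam mu t <= 1.
Proof.
  intros. unfold Ee. split. apply exp_pos.
  rewrite <- exp_0. destruct (Req_dec t 0). subst. rewrite Rmult_0_r. lra.
  left. apply exp_increasing. nra.
Qed.

Lemma den_pos lam mu s t : 0 < mu < lam -> 0 <= s < 1 -> 0 <= t -> 0 < den lam mu s t.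
Proof.
  intros Hm Hs Ht. pose proof (Ee_bounds lam mu t ltac:(lra) Ht). unfold den.
  destruct (Rle_dec (mu - lam * s) 0). nra. nra.
Qed.

Lemma pp_derive lam mu s t : den lam mu s t <> 0 ->
  is_derive (pp lam mu s) t ((lam * pp lam mu s t - mu) * (pp lam mu s t - 1)).
Proof.
  intros Hd. unfold pp, den, Ee in *. auto_derive.
  - exact Hd.
  - field. exact Hd.
Qed.

Lemma rr_derive lam mu s t : den lam mu s t <> 0 ->
  is_derive (rr lam mu s) t (rr lam mu s t * (2 * lam * pp lam mu s t - lam - mu)).
Proof.
  intros Hd. unfold rr, pp, den, Ee in *. auto_derive.
  - intro H. apply Hd. unfold Rminus. nra.
  - field. exact Hd.
Qed.

Definition WW (lam mu s c K t : R) (n : nat) : R :=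
  K * (pp lam mu s t ^ n + c * s * INR n * (pp lam mu s t ^ pred n * rr lam mu s t)).

Definition Wd (lam mu s c K t : R) (n : nat) : R :=
  INR n * (lam * (WW lam mu s c K t (S n) - WW lam mu s c K t n)
           + mu * (WW lam mu s c K t (pred n) - WW lam mu s c K t n)).

Lemma W_derive lam mu s c K t n : den lam mu s t <> 0 ->
  is_derive (fun t => WW lam mu s c K t n) t (Wd lam mu s c K t n).
Proof.
  intros Hd.
  pose proof (pp_derive lam mu s t Hd) as Hp.
  pose proof (rr_derive lam mu s t Hd) as Hr.
  pose proof (is_derive_pow _ n _ _ Hp) as H1.
  pose proof (is_derive_pow _ (pred n) _ _ Hp) as H2.
  pose proof (is_derive_mult _ _ _ _ _ H2 Hr Rmult_comm) as H3.
  pose proof (is_derive_scal _ _ (c * s * INR n) _ H3) as H4.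
  pose proof (is_derive_plus _ _ _ _ _ H1 H4) as H5.
  pose proof (is_derive_scal _ _ K _ H5) as H6.
  unfold WW. 
  match type of H6 with is_derive _ _ ?L => replace (Wd lam mu s c K t n) with L end.
  exact H6.
  unfold Wd, WW.
  set (P := pp lam mu s t). set (Rr := rr lam mu s t).
  destruct n as [|[|j]].
  - unfold plus, mult; simpl. ring.
  - unfold plus, mult; simpl. ring.
  - cbn [Init.Nat.pred]. rewrite !S_INR. generalize (INR j). intro J. unfold plus, mult; simpl. ring.
Qed.

Lemma pp_bounds lam mu s c t : 0 < mu < lam -> 0 <= s < 1 -> 0 <= c -> s * (1 + c) <= 1 -> 0 <= t ->
  0 <= pp lam mu s t /\ pp lam mu s t <= 1 /\ 0 <= rr lam mu s t /\
  c * s * rr lam mu s t <= 1 - pp lam mu s t.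
Proof.
  intros Hm Hs Hc Hsc Ht.
  pose proof (den_pos lam mu s t Hm Hs Ht) as HD.
  pose proof (Ee_bounds lam mu t ltac:(lra) Ht) as HE.
  unfold pp, rr in *. unfold den in *.
  set (E := Ee lam mu t) in *. set (D := lam * (1 - s) - E * (mu - lam * s)) in *.
  assert (HN : 0 <= mu * (1 - s) - E * (mu - lam * s)).
  { destruct (Rle_dec (mu - lam * s) 0). nra.
    assert (E * (mu - lam * s) <= mu - lam * s) by nra. nra. }
  assert (HDN : mu * (1 - s) - E * (mu - lam * s) = D - (lam - mu) * (1 - s)) by (unfold D; ring).
  assert (H1 : 1 - (mu * (1 - s) - E * (mu - lam * s)) / D = (lam - mu) * (1 - s) / D).
  { rewrite HDN. field. lra. }
  assert (H2 : 1 - (mu * (1 - s) - E * (mu - lam * s)) / D - c * s * ((lam - mu) ^ 2 * E / D ^ 2)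
             = (lam - mu) * ((1 - s) * D - c * s * (lam - mu) * E) / D ^ 2).
  { rewrite HDN. field. lra. }
  assert (H3 : 0 <= (1 - s) * D - c * s * (lam - mu) * E).
  { assert (c * s <= 1 - s) by lra.
    assert (c * s * (lam - mu) * E <= (1 - s) * (lam - mu) * E).
    { apply Rmult_le_compat_r. lra. apply Rmult_le_compat_r; lra. }
    assert ((1 - s) * D - (1 - s) * (lam - mu) * E = (1 - s) * (lam * (1 - s) * (1 - E))) by (unfold D; ring).
    assert (0 <= (1 - s) * (lam * (1 - s) * (1 - E))).
    { apply Rmult_le_pos. lra. apply Rmult_le_pos. nra. lra. }
    lra. }
  assert (HDi : 0 < / D) by (apply Rinv_0_lt_compat; lra).
  split; [|split; [|split]].
  - unfold Rdiv. apply Rmult_le_pos; lra.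
  - assert (0 <= (lam - mu) * (1 - s) / D).
    { unfold Rdiv. apply Rmult_le_pos; [|lra]. apply Rmult_le_pos; lra. }
    lra.
  - unfold Rdiv. apply Rmult_le_pos. apply Rmult_le_pos. apply pow2_ge_0. lra.
    left. apply Rinv_0_lt_compat. apply pow_lt. lra.
  - assert (0 <= (lam - mu) * ((1 - s) * D - c * s * (lam - mu) * E) / D ^ 2).
    { unfold Rdiv. apply Rmult_le_pos. apply Rmult_le_pos; lra.
      left. apply Rinv_0_lt_compat. apply pow_lt. lra. }
    lra.
Qed.

Lemma W_nonneg lam mu s c K t n : 0 < mu < lam -> 0 <= s < 1 -> 0 <= c -> s * (1 + c) <= 1 -> 0 <= t -> 0 <= K ->
  0 <= WW lam mu s c K t n.
Proof.
  intros Hm Hs Hc Hsc Ht HK.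
  destruct (pp_bounds lam mu s c t Hm Hs Hc Hsc Ht) as (Hp0 & Hp1 & Hr & Hcr).
  unfold WW. apply Rmult_le_pos; auto.
  apply Rplus_le_le_0_compat. apply pow_le; auto.
  apply Rmult_le_pos. apply Rmult_le_pos. apply Rmult_le_pos; lra. apply pos_INR.
  apply Rmult_le_pos; auto. apply pow_le; auto.
Qed.

Lemma W_dec lam mu s c K t n : 0 < mu < lam -> 0 <= s < 1 -> 0 <= c -> s * (1 + c) <= 1 -> 0 <= t -> 0 <= K ->
  WW lam mu s c K t (S n) <= WW lam mu s c K t n.
Proof.
  intros Hm Hs Hc Hsc Ht HK.
  destruct (pp_bounds lam mu s c t Hm Hs Hc Hsc Ht) as (Hp0 & Hp1 & Hr & Hcr).
  unfold WW. set (P := pp lam mu s t) in *. set (Rr := rr lam mu s t) in *.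
  apply Rmult_le_compat_l; auto.
  assert (Hb : 0 <= c * s * Rr) by (apply Rmult_le_pos; [apply Rmult_le_pos|]; lra).
  destruct n as [|j].
  - simpl. lra.
  - cbn [Init.Nat.pred]. rewrite !S_INR. pose proof (pos_INR j) as Hj. revert Hj. generalize (INR j) as J. intros J HJ.
    simpl. pose proof (pow_le P j Hp0) as Hpj.
    assert (Hx : c * s * Rr * ((J + 1 + 1) * P - (J + 1)) <= c * s * Rr * P).
    { apply Rmult_le_compat_l; auto. nra. }
    assert (Hy : c * s * Rr * P <= (1 - P) * P) by nra.
    assert (Hz : P * P - P + c * s * Rr * ((J + 1 + 1) * P - (J + 1)) <= 0) by lra.
    pose proof (Rmult_le_compat_l (P ^ j) _ 0 Hpj Hz) as Hw.
    rewrite Rmult_0_r in Hw. nra.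
Qed.

Lemma W_anti lam mu s c K t : 0 < mu < lam -> 0 <= s < 1 -> 0 <= c -> s * (1 + c) <= 1 -> 0 <= t -> 0 <= K ->
  forall j k, (j <= k)%nat -> WW lam mu s c K t k <= WW lam mu s c K t j.
Proof.
  intros Hm Hs Hc Hsc Ht HK j k Hjk. induction Hjk. lra.
  eapply Rle_trans. apply W_dec; auto. exact IHHjk.
Qed.

Lemma pp0 lam mu s : mu < lam -> pp lam mu s 0 = s.
Proof. intros. unfold pp, den, Ee. rewrite Rmult_0_r, exp_0. field. lra. Qed.

Lemma rr0 lam mu s : mu < lam -> rr lam mu s 0 = 1.
Proof. intros. unfold rr, den, Ee. rewrite Rmult_0_r, exp_0. field. lra. Qed.

Lemma W_init lam mu s c K n : mu < lam ->
  WW lam mu s c K 0 n = K * s ^ n * (1 + c * INR n).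
Proof.
  intros H. unfold WW. rewrite pp0, rr0 by auto.
  destruct n as [|j]. simpl. ring. cbn [Init.Nat.pred pow]. ring.
Qed.

Lemma cont_mult (f g : R -> R) x: continuous f x -> continuous g x -> continuous (fun y => f y * g y) x.
Proof. exact (@continuous_mult R_UniformSpace R_AbsRing f g x). Qed.
Lemma cont_plus (f g : R -> R) x: continuous f x -> continuous g x -> continuous (fun y => f y + g y) x.
Proof. exact (@continuous_plus R_UniformSpace R_AbsRing R_NormedModule f g x). Qed.
Lemma cont_comp (f g : R -> R) x: continuous f x -> continuous g (f x) -> continuous (fun y => g (f y)) x.
Proof. exact (@continuous_comp R_UniformSpace R_UniformSpace R_UniformSpace f g x). Qed.
Lemma cont_const (a x : R) : continuous (fun _ : R => a) x.
Proof. apply continuous_const. Qed.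
Lemma cont_minus (f g : R -> R) x: continuous f x -> continuous g x -> continuous (fun y => f y - g y) x.
Proof. intros. apply cont_plus; auto.
  exact (@continuous_opp R_UniformSpace R_AbsRing R_NormedModule g x H0). Qed.
Lemma cont_shift (f : R -> R) (t u : R) : continuous f (t - u) -> continuous (fun v => f (t - v)) u.
Proof. intros. apply (cont_comp (fun v => t - v) f). apply cont_minus. apply cont_const.
  apply continuous_id. exact H. Qed.
Lemma cont_exp (q u : R) : continuous (fun v => exp (- q * v)) u.
Proof. apply (@ex_derive_continuous R_AbsRing R_NormedModule). auto_derive. auto. Qed.

Lemma W_cont lam mu s c K t n : den lam mu s t <> 0 -> continuous (fun t => WW lam mu s c K t n) t.
Proof. intros. apply (@ex_derive_continuous R_AbsRing R_NormedModule). eexists. apply W_derive. auto. Qed.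

Lemma Wd_cont lam mu s c K t n : den lam mu s t <> 0 -> continuous (fun t => Wd lam mu s c K t n) t.
Proof. intros. unfold Wd. apply cont_mult. apply cont_const.
  apply cont_plus; apply cont_mult; try apply cont_const; apply cont_minus; apply W_cont; auto.
Qed.

Lemma duhamel lam mu s c K q t n : 0 < mu < lam -> 0 <= s < 1 -> 0 <= t ->
  is_RInt (fun u => exp (- q * u) * (q * WW lam mu s c K (t - u) n + Wd lam mu s c K (t - u) n)) 0 t
    (WW lam mu s c K t n - exp (- q * t) * WW lam mu s c K 0 n).
Proof.
  intros Hm Hs Ht.
  assert (Hden : forall u, 0 <= u <= t -> den lam mu s (t - u) <> 0).
  { intros u Hu. apply Rgt_not_eq. apply den_pos; auto. lra. }
  set (f := fun u => - (exp (- q * u) * WW lam mu s c K (t - u) n)).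
  assert (Hf : forall u, Rmin 0 t <= u <= Rmax 0 t -> is_derive f u
     (exp (- q * u) * (q * WW lam mu s c K (t - u) n + Wd lam mu s c K (t - u) n))).
  { intros u Hu. rewrite Rmin_left, Rmax_right in Hu by lra.
    pose proof (W_derive lam mu s c K (t - u) n (Hden u Hu)) as Ha.
    assert (Hb : is_derive (fun u => t - u) u (-1)) by (auto_derive; auto; ring).
    pose proof (is_derive_comp (fun v => WW lam mu s c K v n) (fun u => t - u) u _ _ Ha Hb) as Hc.
    assert (He : is_derive (fun u => exp (- q * u)) u (- q * exp (- q * u))) by (auto_derive; auto; ring).
    pose proof (is_derive_mult _ _ _ _ _ He Hc Rmult_comm) as Hm2.
    pose proof (is_derive_opp _ _ _ Hm2) as Ho.
    unfold f. 
    match type of Ho with is_derive _ _ ?L => replace (exp (- q * u) * (q * WW lam mu s c K (t - u) n + Wd lam mu s c K (t - u) n)) with L end.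
    exact Ho.
    unfold opp, plus, mult, scal; simpl. unfold mult; simpl. ring. }
  pose proof (is_RInt_derive f _ 0 t Hf) as HI.
  replace (WW lam mu s c K t n - exp (- q * t) * WW lam mu s c K 0 n) with (minus (f t) (f 0)).
  apply HI.
  { intros u Hu. rewrite Rmin_left, Rmax_right in Hu by lra.
    apply cont_mult. apply cont_exp. apply cont_plus. apply cont_mult. apply cont_const.
    apply (cont_shift (fun v => WW lam mu s c K v n)). apply W_cont. apply Hden; auto.
    apply (cont_shift (fun v => Wd lam mu s c K v n)). apply Wd_cont. apply Hden; auto. }
  unfold f, minus, plus, opp; simpl. rewrite Rminus_0_r, Rmult_0_r, exp_0. rewrite Rminus_diag. ring.
Qed.


Lemma moves_rate_nonneg d xi x rz : (forall z, 0 <= xi z) -> In rz (moves d xi x) -> 0 <= fst rz.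
Proof.
  intros Hxi H. unfold moves in H. apply in_flat_map in H. destruct H as [i [_ H]].
  destruct H as [H|H]. subst rz. simpl. apply Hxi.
  apply in_flat_map in H. destruct H as [k [_ H]].
  destruct H as [H|[H|[]]]; subst rz; simpl; lra.
Qed.

Lemma cont_fsum {A : Type} (f : A -> R -> R) (l : list A) u :
  (forall a, In a l -> continuous (f a) u) -> continuous (fun v => fsum (map (fun a => f a v) l)) u.
Proof.
  induction l as [|a l IH]; intros H. unfold fsum; simpl. apply cont_const.
  unfold fsum in *; cbn [map fold_right]. apply (cont_plus (f a) (fun v => fold_right Rplus 0 (map (fun a0 => f a0 v) l))).
  apply H; simpl; auto. apply IH. intros; apply H; simpl; auto.
Qed.

Lemma fsum_plus {A : Type} (f g : A -> R) (l : list A) :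
  fsum (map (fun a => f a + g a) l) = fsum (map f l) + fsum (map g l).
Proof. induction l; unfold fsum in *; simpl. lra. rewrite IHl. lra. Qed.

Lemma fsum_scal {A : Type} (c : R) (f : A -> R) (l : list A) :
  fsum (map (fun a => c * f a) l) = c * fsum (map f l).
Proof. induction l; unfold fsum in *; simpl. lra. rewrite IHl. lra. Qed.

Lemma ex_RInt_cont (f : R -> R) a b :
  (forall z, Rmin a b <= z <= Rmax a b -> continuous f z) -> ex_RInt f a b.
Proof. apply (@ex_RInt_continuous R_CompleteNormedModule). Qed.

Definition Wc d xi s c K t (x : config) : R :=
  WW (xi (origin d)) (2 * INR d) s c K t (Ncount (origin d) x).

Lemma step d xi (Ev : config -> bool) s c K (P : R -> config -> R) :
  0 < 2 * INR d < xi (origin d) -> (forall z, 0 <= xi z) ->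
  0 <= s < 1 -> 0 <= c -> s * (1 + c) <= 1 -> 0 <= K ->
  (forall x, (if Ev x then 1 else 0) <= Wc d xi s c K 0 x) ->
  (forall z t, continuous (fun t => P t z) t) ->
  (forall t z, 0 <= t -> P t z <= Wc d xi s c K t z) ->
  forall t x, 0 <= t ->
  (if Ev x then exp (- qrate d xi x * t) else 0) +
  RInt (fun u => exp (- qrate d xi x * u) *
     fold_right Rplus 0 (map (fun rz => fst rz * P (t - u) (snd rz)) (moves d xi x))) 0 t
  <= Wc d xi s c K t x.
Proof.
  intros Hm Hxi Hs Hc Hsc HK Hinit HPc HPb t x Ht.
  set (lam := xi (origin d)) in *. set (mu := 2 * INR d) in *.
  set (q := qrate d xi x). set (n := Ncount (origin d) x).
  assert (Hden : forall u, 0 <= u <= t -> den lam mu s (t - u) <> 0).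
  { intros u Hu. apply Rgt_not_eq. apply den_pos; auto. lra. }
  assert (HWc : forall z u, 0 <= u <= t -> continuous (fun v => Wc d xi s c K (t - v) z) u).
  { intros z u Hu. unfold Wc. apply (cont_shift (fun v => WW lam mu s c K v (Ncount (origin d) z))).
    apply W_cont. apply Hden; auto. }
  set (I1 := RInt (fun u => exp (- q * u) *
     fold_right Rplus 0 (map (fun rz => fst rz * P (t - u) (snd rz)) (moves d xi x))) 0 t).
  set (I2 := RInt (fun u => exp (- q * u) *
     fold_right Rplus 0 (map (fun rz => fst rz * Wc d xi s c K (t - u) (snd rz)) (moves d xi x))) 0 t).
  set (I3 := RInt (fun u => exp (- q * u) * (q * WW lam mu s c K (t - u) n + Wd lam mu s c K (t - u) n)) 0 t).
  assert (H12 : I1 <= I2).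
  { apply RInt_le. lra.
    - apply ex_RInt_cont. intros u _. apply cont_mult. apply cont_exp.
      apply (cont_fsum (fun rz v => fst rz * P (t - v) (snd rz))). intros rz _.
      apply cont_mult. apply cont_const. apply (cont_shift (fun v => P v (snd rz))). apply HPc.
    - apply ex_RInt_cont. intros u Hu. rewrite Rmin_left, Rmax_right in Hu by lra.
      apply cont_mult. apply cont_exp.
      apply (cont_fsum (fun rz v => fst rz * Wc d xi s c K (t - v) (snd rz))). intros rz _.
      apply cont_mult. apply cont_const. apply HWc; auto.
    - intros u Hu. apply Rmult_le_compat_l. left; apply exp_pos.
      apply (fsum_le (fun rz => fst rz * P (t - u) (snd rz)) (fun rz => fst rz * Wc d xi s c K (t - u) (snd rz))).
      intros rz Hrz. apply Rmult_le_compat_l. eapply moves_rate_nonneg; eauto.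
      apply HPb. lra. }
  assert (H23 : I2 <= I3).
  { apply RInt_le. lra.
    - apply ex_RInt_cont. intros u Hu. rewrite Rmin_left, Rmax_right in Hu by lra.
      apply cont_mult. apply cont_exp.
      apply (cont_fsum (fun rz v => fst rz * Wc d xi s c K (t - v) (snd rz))). intros rz _.
      apply cont_mult. apply cont_const. apply HWc; auto.
    - eexists. apply duhamel; lra.
    - intros u Hu. apply Rmult_le_compat_l. left; apply exp_pos.
      unfold Wc.
      pose proof (moves_bound d xi (fun k => WW lam mu s c K (t - u) k) x (origin d) Hxi) as HB.
      apply HB. intros j k Hjk. apply W_anti; auto; lra. }
  assert (H3 : I3 = WW lam mu s c K t n - exp (- q * t) * WW lam mu s c K 0 n).
  { apply is_RInt_unique. apply duhamel; lra. }
  fold I1. 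
  assert (Hi : (if Ev x then exp (- q * t) else 0) <= exp (- q * t) * WW lam mu s c K 0 n).
  { pose proof (Hinit x) as H0. unfold Wc in H0. fold lam mu n in H0.
    destruct (Ev x). rewrite <- (Rmult_1_r (exp (- q * t))) at 1. apply Rmult_le_compat_l.
    left; apply exp_pos. exact H0.
    apply Rmult_le_pos. left; apply exp_pos. lra. }
  unfold Wc. fold lam mu n. lra.
Qed.

Lemma RInt_cont_upper (G : R -> R) t : (forall v, continuous G v) ->
  continuous (fun b => RInt G 0 b) t.
Proof.
  intros HG. apply (@ex_derive_continuous R_AbsRing R_NormedModule).
  exists (G t). apply (is_derive_RInt G (fun b => RInt G 0 b) 0 t).
  - apply filter_forall. intros b. apply (@RInt_correct R_CompleteNormedModule).
    apply ex_RInt_cont. intros; apply HG.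
  - apply HG.
Qed.

Lemma conv_repr (q t : R) (H : R -> R) : (forall v, continuous H v) ->
  RInt (fun u => exp (- q * u) * H (t - u)) 0 t = exp (- q * t) * RInt (fun v => exp (q * v) * H v) 0 t.
Proof.
  intros HH.
  set (g := fun v => - (exp (- q * (t - v)) * H v)).
  assert (Hg : forall a b, ex_RInt g a b).
  { intros a b. apply ex_RInt_cont. intros z _. unfold g.
    apply (@continuous_opp R_UniformSpace R_AbsRing R_NormedModule).
    apply cont_mult; [|apply HH].
    apply (cont_comp (fun v => t - v) (fun w => exp (- q * w))). apply cont_minus.
    apply cont_const. apply continuous_id. apply cont_exp. }
  rewrite (RInt_ext _ (fun y => scal (-1) (g (-1 * y + t)))).
  2:{ intros y _. unfold g, scal; simpl. unfold mult; simpl.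
      replace (-1 * y + t) with (t - y) by ring. replace (t - (t - y)) with y by ring. ring. }
  rewrite (@RInt_comp_lin R_CompleteNormedModule g).
  2:{ apply Hg. }
  replace (-1 * 0 + t) with t by ring. replace (-1 * t + t) with 0 by ring.
  rewrite <- (@opp_RInt_swap R_CompleteNormedModule g 0 t) by apply Hg.
  unfold g. rewrite (@RInt_opp R_CompleteNormedModule).
  2:{ apply ex_RInt_cont. intros z _. apply cont_mult; [|apply HH].
      apply (cont_comp (fun v => t - v) (fun w => exp (- q * w))). apply cont_minus.
      apply cont_const. apply continuous_id. apply cont_exp. }
  unfold opp; simpl. rewrite Ropp_involutive.
  rewrite (RInt_ext _ (fun v => scal (exp (- q * t)) (exp (q * v) * H v))).
  2:{ intros v _. unfold scal; simpl. unfold mult; simpl.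
      replace (- q * (t - v)) with (- q * t + q * v) by ring. rewrite exp_plus. ring. }
  rewrite (@RInt_scal R_CompleteNormedModule). reflexivity.
  apply ex_RInt_cont. intros z _. apply cont_mult. 
  apply (continuous_ext (fun v => exp (- (- q) * v))). intros; f_equal; ring. apply cont_exp.
  apply HH.
Qed.

Lemma jprob_S d xi E m t x :
  jprob d xi E (S m) t x = RInt (fun u => exp (- qrate d xi x * u) *
     fold_right Rplus 0 (map (fun rz => fst rz * jprob d xi E m (t - u) (snd rz)) (moves d xi x))) 0 t.
Proof. reflexivity. Qed.

Lemma jprob_cont d xi E m : forall x t, continuous (fun t => jprob d xi E m t x) t.
Proof.
  induction m as [|m IH]; intros x t.
  - simpl. destruct (E x). apply cont_exp. apply cont_const.
  - set (q := qrate d xi x).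
    set (H := fun v => fold_right Rplus 0 (map (fun rz => fst rz * jprob d xi E m v (snd rz)) (moves d xi x))).
    assert (HH : forall v, continuous H v).
    { intros v. apply (cont_fsum (fun rz v => fst rz * jprob d xi E m v (snd rz))).
      intros rz _. apply cont_mult. apply cont_const. apply IH. }
    apply (continuous_ext (fun t => exp (- q * t) * RInt (fun v => exp (q * v) * H v) 0 t)).
    { intros t'. rewrite jprob_S. symmetry. apply (conv_repr q t' H HH). }
    apply cont_mult. apply cont_exp. apply RInt_cont_upper.
    intros v. apply cont_mult. 
    apply (continuous_ext (fun v => exp (- (- q) * v))). intros; f_equal; ring. apply cont_exp.
    apply HH.
Qed.

Lemma sum_n_shift (a : nat -> R) N : sum_n a (S N) = a O + sum_n (fun k => a (S k)) N.
Proof.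
  induction N. rewrite sum_Sn, !sum_O. reflexivity.
  rewrite sum_Sn, IHN, sum_Sn. unfold plus; simpl. ring.
Qed.

Lemma RInt_sum_n (g : nat -> R -> R) a b N : (forall k, ex_RInt (g k) a b) ->
  ex_RInt (fun u => sum_n (fun k => g k u) N) a b /\
  RInt (fun u => sum_n (fun k => g k u) N) a b = sum_n (fun k => RInt (g k) a b) N.
Proof.
  intros Hg. induction N.
  - split. apply (ex_RInt_ext (g O)). intros; rewrite sum_O; auto. apply Hg.
    rewrite sum_O. apply RInt_ext. intros; rewrite sum_O; auto.
  - destruct IHN as [H1 H2]. split.
    + apply (ex_RInt_ext (fun u => plus (sum_n (fun k => g k u) N) (g (S N) u))).
      intros; rewrite sum_Sn; auto. apply (@ex_RInt_plus R_NormedModule); auto.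
    + rewrite (RInt_ext _ (fun u => plus (sum_n (fun k => g k u) N) (g (S N) u))).
      2:{ intros; rewrite sum_Sn; auto. }
      rewrite (@RInt_plus R_CompleteNormedModule); auto. rewrite H2, sum_Sn. reflexivity.
Qed.

Lemma sum_fsum {A : Type} (J : nat -> A -> R) (f : A -> R) (l : list A) N :
  sum_n (fun k => fsum (map (fun a => f a * J k a) l)) N = fsum (map (fun a => f a * sum_n (fun k => J k a) N) l).
Proof.
  induction N.
  - rewrite sum_O. apply fsum_ext. intros. rewrite sum_O. auto.
  - rewrite sum_Sn, IHN. unfold plus; simpl. rewrite <- fsum_plus. apply fsum_ext.
    intros. rewrite sum_Sn. unfold plus; simpl. ring.
Qed.

Lemma cont_sum_n (g : nat -> R -> R) N t : (forall k, continuous (g k) t) ->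
  continuous (fun u => sum_n (fun k => g k u) N) t.
Proof.
  intros Hg. induction N.
  - apply (continuous_ext (g O)). intros; rewrite sum_O; auto. apply Hg.
  - apply (continuous_ext (fun u => sum_n (fun k => g k u) N + g (S N) u)).
    intros; rewrite sum_Sn; auto. apply cont_plus; auto.
Qed.

Lemma partial_bound d xi (Ev : config -> bool) s c K :
  0 < 2 * INR d < xi (origin d) -> (forall z, 0 <= xi z) ->
  0 <= s < 1 -> 0 <= c -> s * (1 + c) <= 1 -> 0 <= K ->
  (forall x, (if Ev x then 1 else 0) <= Wc d xi s c K 0 x) ->
  forall N t x, 0 <= t -> sum_n (fun n => jprob d xi Ev n t x) N <= Wc d xi s c K t x.
Proof.
  intros Hm Hxi Hs Hc Hsc HK Hinit N.
  induction N as [|N IH]; intros t x Ht.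
  - rewrite sum_O.
    pose proof (step d xi Ev s c K (fun _ _ => 0) Hm Hxi Hs Hc Hsc HK Hinit) as HS.
    assert (HR : RInt (fun u => exp (- qrate d xi x * u) *
       fold_right Rplus 0 (map (fun rz => fst rz * (fun _ _ => 0) (t - u) (snd rz)) (moves d xi x))) 0 t = 0).
    { rewrite (RInt_ext _ (fun _ => 0)).
      rewrite RInt_const. unfold scal; simpl. unfold mult; simpl. ring.
      intros u _. change (fold_right Rplus 0 ?L) with (fsum L).
      rewrite (fsum_ext _ (fun _ => 0)). 2: (intros; simpl; ring). rewrite fsum_const. rewrite !Rmult_0_r. reflexivity. }
    specialize (HS ltac:(intros; apply cont_const)).
    assert (HW : forall t z, 0 <= t -> (fun _ _ => 0) t z <= Wc d xi s c K t z).
    { intros t' z Ht'. unfold Wc. apply W_nonneg; auto. }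
    specialize (HS HW t x Ht). cbv beta in HS. rewrite HR in HS. simpl. lra.
  - rewrite sum_n_shift.
    set (q := qrate d xi x).
    set (g := fun k u => exp (- q * u) *
       fold_right Rplus 0 (map (fun rz => fst rz * jprob d xi Ev k (t - u) (snd rz)) (moves d xi x))).
    assert (Hg : forall k, ex_RInt (g k) 0 t).
    { intros k. apply ex_RInt_cont. intros u _. unfold g. apply cont_mult. apply cont_exp.
      apply (cont_fsum (fun rz v => fst rz * jprob d xi Ev k (t - v) (snd rz))). intros rz _.
      apply cont_mult. apply cont_const.
      apply (cont_shift (fun v => jprob d xi Ev k v (snd rz))). apply jprob_cont. }
    rewrite (sum_n_ext _ (fun k => RInt (g k) 0 t)).
    2:{ intros k. rewrite jprob_S. reflexivity. }
    destruct (RInt_sum_n g 0 t N Hg) as [_ HE]. rewrite <- HE.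
    rewrite (RInt_ext _ (fun u => exp (- q * u) *
       fold_right Rplus 0 (map (fun rz => fst rz * (fun t z => sum_n (fun k => jprob d xi Ev k t z) N) (t - u) (snd rz))
       (moves d xi x)))).
    2:{ intros u _. unfold g.
        rewrite (sum_n_ext _ (fun k => mult (exp (- q * u)) (fsum (map (fun rz => fst rz * jprob d xi Ev k (t - u) (snd rz)) (moves d xi x))))) by reflexivity.
        rewrite sum_n_mult_l. unfold mult; simpl.
        rewrite (sum_fsum (fun k rz => jprob d xi Ev k (t - u) (snd rz)) fst). reflexivity. }
    apply (step d xi Ev s c K (fun t z => sum_n (fun k => jprob d xi Ev k t z) N)); auto.
    + intros z t'. apply (cont_sum_n (fun k t => jprob d xi Ev k t z)). intros. apply jprob_cont.
Qed.


Lemma Ncount_single d : Ncount (origin d) [origin d] = 1%nat.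
Proof. unfold Ncount. simpl. destruct (list_eq_dec Z.eq_dec (origin d) (origin d)); congruence. Qed.

Lemma final_generic d xi T a s c K B :
  0 < 2 * INR d < xi (origin d) -> (forall z, 0 <= xi z) ->
  0 <= s < 1 -> 0 <= c -> s * (1 + c) <= 1 -> 0 <= K -> 0 <= T -> 0 <= B ->
  (forall n, (if Rltb (INR n) a then 1 else 0) <= WW (xi (origin d)) (2 * INR d) s c K 0 n) ->
  WW (xi (origin d)) (2 * INR d) s c K T 1 <= B ->
  brw_prob d xi (fun x => Rltb (INR (Ncount (origin d) x)) a) T <= B.
Proof.
  intros Hm Hxi Hs Hc Hsc HK HT HB0 Hinit HB.
  assert (Hp : forall N, sum_n (fun n => jprob d xi (fun x => Rltb (INR (Ncount (origin d) x)) a) n T [origin d]) N <= B).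
  { intros N. eapply Rle_trans. apply (partial_bound d xi _ s c K Hm Hxi Hs Hc Hsc HK).
    intros x. unfold Wc. apply Hinit. exact HT.
    unfold Wc. rewrite Ncount_single. exact HB. }
  unfold brw_prob, Series.
  pose proof (Lim_seq_le_loc (sum_n (fun n => jprob d xi (fun x => Rltb (INR (Ncount (origin d) x)) a) n T [origin d])) (fun _ => B)) as HL.
  rewrite Lim_seq_const in HL.
  assert (HL2 : Rbar_le (Lim_seq (sum_n (fun n => jprob d xi (fun x => Rltb (INR (Ncount (origin d) x)) a) n T [origin d]))) B).
  { apply HL. exists O. intros; apply Hp. }
  destruct (Lim_seq (sum_n _)); simpl in *; lra.
Qed.


Lemma ppT_formula lam mu T m : 0 < mu < lam -> 1 <= m -> Ee lam mu T = / m ->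
  pp lam mu (m / (m + 1)) T + / m * (m / (m + 1)) * rr lam mu (m / (m + 1)) T =
  ((lam * m - mu) * ((2 * lam - mu) * m - mu) + (lam - mu) ^ 2 * m * (m + 1)) / ((2 * lam - mu) * m - mu) ^ 2.
Proof.
  intros Hm H1 HE. unfold pp, rr, den. rewrite HE.
  assert (0 < (2 * lam - mu) * m - mu) by nra.
  field. repeat split; try lra. 
Qed.

Lemma poly3 lam mu m : 0 < mu -> 2 * mu <= lam -> 4 <= m ->
  (lam * m - mu) * ((2 * lam - mu) * m - mu) + (lam - mu) ^ 2 * m * (m + 1) <= 21 / 25 * ((2 * lam - mu) * m - mu) ^ 2.
Proof.
  intros H1 H2 H3.
  set (v := lam - 2 * mu). set (u := m - 4).
  assert (Hv : 0 <= v) by (unfold v; lra). assert (Hu : 0 <= u) by (unfold u; lra).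
  replace lam with (2 * mu + v) by (unfold v; ring). replace m with (4 + u) by (unfold u; ring).
  assert (0 <= 44 * v^2 + 47 * v^2 * u + 9 * v^2 * u^2 + 196 * mu * v + 157 * mu * v * u + 27 * mu * v * u^2
              + 116 * mu^2 + 86 * mu^2 * u + 14 * mu^2 * u^2).
  { repeat apply Rplus_le_le_0_compat; repeat apply Rmult_le_pos; try lra; apply pow_le; lra. }
  nra.
Qed.

Lemma poly2 lam mu m : 0 < mu -> 2 * mu <= lam -> 2 <= m ->
  (lam * m - mu) * ((2 * lam - mu) * m - mu) + (lam - mu) ^ 2 * m * (m + 1) <= 15 / 16 * ((2 * lam - mu) * m - mu) ^ 2.
Proof.
  intros H1 H2 H3.
  set (v := lam - 2 * mu). set (u := m - 2).
  assert (Hv : 0 <= v) by (unfold v; lra). assert (Hu : 0 <= u) by (unfold u; lra).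
  replace lam with (2 * mu + v) by (unfold v; ring). replace m with (2 + u) by (unfold u; ring).
  assert (0 <= 16 * v^2 + 32 * v^2 * u + 12 * v^2 * u^2 + 56 * mu * v + 100 * mu * v * u + 36 * mu * v * u^2
              + 39 * mu^2 + 66 * mu^2 * u + 23 * mu^2 * u^2).
  { repeat apply Rplus_le_le_0_compat; repeat apply Rmult_le_pos; try lra; apply pow_le; lra. }
  nra.
Qed.

Lemma exp_pow_nat (x : R) (n : nat) : exp x ^ n = exp (INR n * x).
Proof.
  induction n. simpl. rewrite Rmult_0_l, exp_0. reflexivity.
  rewrite S_INR. simpl pow. rewrite IHn, <- exp_plus. f_equal. ring.
Qed.

Lemma exp_half_le : exp (1 / 2) <= (20 / 19) ^ 10.
Proof.
  assert (H1 : 1 + (- (1 / 20)) < exp (- (1 / 20))) by (apply exp_ineq1; lra).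
  assert (H2 : exp (1 / 20) <= 20 / 19).
  { rewrite <- (Ropp_involutive (1/20)), exp_Ropp.
    apply Rmult_le_reg_r with (exp (- (1/20))). apply exp_pos.
    rewrite Rinv_l by (apply Rgt_not_eq, exp_pos). lra. }
  replace (1 / 2) with (INR 10 * (1 / 20)) by (simpl; lra).
  rewrite <- exp_pow_nat. apply pow_incr. split. left; apply exp_pos. exact H2.
Qed.

Lemma h_incr x : 0 < x < 1 / 2 -> exp x / (1 + x) < exp (1 / 2) / (1 + 1 / 2).
Proof.
  intros Hx.
  apply (incr_function_le (fun x => exp x / (1 + x)) (Finite x) (Finite (1/2)) (fun y => y * exp y / (1 + y) ^ 2)).
  - intros y H1 H2. simpl in H1, H2. auto_derive. lra. field. lra.
  - intros y H1 H2. simpl in H1, H2. unfold Rdiv. apply Rmult_lt_0_compat.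
    apply Rmult_lt_0_compat. lra. apply exp_pos. apply Rinv_0_lt_compat. apply pow_lt. lra.
  - simpl; lra.
  - lra.
  - simpl; lra.
Qed.

Lemma exp_le_K x : 0 <= x < 1 / 2 -> exp x <= 2 / 3 * exp (1 / 2) * (1 + x).
Proof.
  intros Hx. destruct (Req_dec x 0) as [->|Hx0].
  - rewrite exp_0. assert (1 + 1/2 < exp (1/2)) by (apply exp_ineq1; lra). lra.
  - pose proof (h_incr x ltac:(lra)) as H.
    apply Rmult_lt_compat_r with (r := 1 + x) in H; [|lra].
    unfold Rdiv in H. rewrite Rmult_assoc, Rinv_l, Rmult_1_r in H by lra. lra.
Qed.


Lemma div_le (P D k : R) : 0 < D -> P <= k * D -> P / D <= k.
Proof. intros HD HP. unfold Rdiv. apply Rmult_le_reg_r with D; auto.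
  rewrite Rmult_assoc, Rinv_l, Rmult_1_r by lra. lra. Qed.

Lemma div_lt1 (m : R) : 0 < m -> m / (m + 1) < 1.
Proof. intros. apply Rmult_lt_reg_r with (m + 1). lra. unfold Rdiv.
  rewrite Rmult_assoc, Rinv_l, Rmult_1_r by lra. lra. Qed.

Lemma Rltb_false (x y : R) : y <= x -> Rltb x y = false.
Proof. intros H. unfold Rltb. destruct (Rlt_dec x y); [lra|auto]. Qed.

Lemma ind_le1 (b : bool) : (if b then 1 else 0) <= 1.
Proof. destruct b; lra. Qed.

Theorem lemma2p2 (d : nat) (Hd : (1 <= d)%nat) (xi : site -> R)
  (Hxi : forall z, 0 <= xi z) (H0 : xi (origin d) >= 4 * INR d)
  (t : R) (Ht : 0 <= t) :
  brw_prob d xi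
    (fun x => Rltb (INR (Ncount (origin d) x))
                   (/ 2 * exp ((xi (origin d) - 2 * INR d) * t))) t
  <= 15 / 16.
Proof.
  assert (Hd1 : 1 <= INR d) by (apply (le_INR 1 d) in Hd; simpl in Hd; lra).
  set (lam := xi (origin d)) in *. set (mu := 2 * INR d) in *.
  assert (Hmu : 2 <= mu) by (unfold mu; lra).
  assert (Hlam : 2 * mu <= lam) by (unfold mu; lra).
  assert (Hm : 0 < mu < lam) by lra.
  assert (Hm' : 0 < 2 * INR d < xi (origin d)) by (fold mu lam; lra).
  set (m := exp ((lam - mu) * t)).
  assert (Hm1 : 1 <= m).
  { unfold m. rewrite <- exp_0. destruct (Req_dec ((lam - mu) * t) 0) as [e|e].
    rewrite e; lra. left; apply exp_increasing. nra. }
  assert (HE : Ee lam mu t = / m).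
  { unfold Ee, m. rewrite <- exp_Ropp. f_equal. ring. }
  set (a := / 2 * m).
  destruct (Rle_dec m 2) as [Hm2|Hm2].
  -
    apply (final_generic d xi t a 0 0 1 (15/16)); auto; try lra.
    + intros n. fold lam mu. rewrite W_init by lra. destruct n as [|j].
      * simpl. pose proof (ind_le1 (Rltb 0 a)). lra.
      * rewrite Rltb_false. simpl. lra. rewrite S_INR. pose proof (pos_INR j). unfold a. lra.
    + fold lam mu. unfold WW. simpl. replace (1 * (pp lam mu 0 t * 1 + 0 * 0 * 1 * (1 * rr lam mu 0 t))) with (pp lam mu 0 t) by ring.
      unfold pp, den. rewrite HE.
      assert (Hmi : 0 < / m <= 1).
      { split. apply Rinv_0_lt_compat; lra. rewrite <- Rinv_1. apply Rinv_le_contravar; lra. }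
      apply Rle_trans with (1/2); [|lra].
      apply div_le. nra. nra.
  - destruct (Rle_dec m 4) as [Hm4|Hm4].
    +
      assert (Hsc : m / (m + 1) * (1 + / m) = 1) by (field; lra).
      assert (Hs : 0 <= m / (m + 1) < 1).
      { split. apply Rmult_le_pos; [lra|left; apply Rinv_0_lt_compat; lra].
        apply div_lt1; lra. }
      assert (Hc : 0 <= / m) by (left; apply Rinv_0_lt_compat; lra).
      apply (final_generic d xi t a (m / (m + 1)) (/ m) 1 (15/16)); auto; try lra.
      * intros n. fold lam mu. rewrite W_init by lra. destruct n as [|[|j]].
        -- simpl. pose proof (ind_le1 (Rltb 0 a)). lra.
        -- simpl. pose proof (ind_le1 (Rltb 1 a)). lra.
        -- rewrite Rltb_false. apply Rmult_le_pos. apply Rmult_le_pos. lra. apply pow_le. lra.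
           pose proof (pos_INR (S (S j))). nra.
           rewrite !S_INR. pose proof (pos_INR j). unfold a. lra.
      * fold lam mu. unfold WW. simpl pow. simpl INR. rewrite Rmult_1_l.
        replace (pp lam mu (m / (m + 1)) t * 1 + / m * (m / (m + 1)) * 1 * (1 * rr lam mu (m / (m + 1)) t))
          with (pp lam mu (m / (m + 1)) t + / m * (m / (m + 1)) * rr lam mu (m / (m + 1)) t) by ring.
        rewrite (ppT_formula lam mu t m Hm Hm1 HE).
        apply div_le. apply pow_lt. nra. apply poly2; lra.
    +
      assert (Hsc : m / (m + 1) * (1 + / m) = 1) by (field; lra).
      assert (Hs : 0 <= m / (m + 1) < 1).
      { split. apply Rmult_le_pos; [lra|left; apply Rinv_0_lt_compat; lra].
        apply div_lt1; lra. }
      assert (Hc : 0 < / m) by (apply Rinv_0_lt_compat; lra).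
      assert (HK1 : 1 <= 2 / 3 * exp (1 / 2)) by (assert (1 + 1/2 < exp (1/2)) by (apply exp_ineq1; lra); lra).
      apply (final_generic d xi t a (m / (m + 1)) (/ m) (2 / 3 * exp (1 / 2)) (15/16)); auto; try lra.
      * intros n. fold lam mu. rewrite W_init by lra.
        unfold Rltb. destruct (Rlt_dec (INR n) a) as [Hn|Hn].
        -- set (s := m / (m + 1)) in *. set (c := / m) in *.
           assert (Hx : 0 <= INR n * c < 1 / 2).
           { split. apply Rmult_le_pos. apply pos_INR. lra.
             unfold a in Hn. unfold c. apply Rmult_lt_reg_r with m. lra.
             rewrite Rmult_assoc, Rinv_l, Rmult_1_r by lra. lra. }
           assert (HA : (1 + c) ^ n <= 2 / 3 * exp (1 / 2) * (1 + c * INR n)).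
           { eapply Rle_trans. apply pow_incr. split. lra. left. apply exp_ineq1. lra.
             rewrite exp_pow_nat. replace (c * INR n) with (INR n * c) by ring. apply exp_le_K. exact Hx. }
           assert (HB : s ^ n * (1 + c) ^ n = 1) by (rewrite <- Rpow_mult_distr, Hsc; apply pow1).
           assert (Hsn : 0 <= s ^ n) by (apply pow_le; lra).
           pose proof (Rmult_le_compat_l _ _ _ Hsn HA). nra.
        -- apply Rmult_le_pos. apply Rmult_le_pos. lra. apply pow_le. lra.
           pose proof (pos_INR n). nra.
      * fold lam mu. unfold WW. simpl pow. simpl INR.
        replace (pp lam mu (m / (m + 1)) t * 1 + / m * (m / (m + 1)) * 1 * (1 * rr lam mu (m / (m + 1)) t))
          with (pp lam mu (m / (m + 1)) t + / m * (m / (m + 1)) * rr lam mu (m / (m + 1)) t) by ring.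
        rewrite (ppT_formula lam mu t m Hm Hm1 HE).
        assert (HX : ((lam * m - mu) * ((2 * lam - mu) * m - mu) + (lam - mu) ^ 2 * m * (m + 1)) /
                       ((2 * lam - mu) * m - mu) ^ 2 <= 21 / 25).
        { apply div_le. apply pow_lt. nra. apply poly3; lra. }
        assert (HX0 : 0 <= ((lam * m - mu) * ((2 * lam - mu) * m - mu) + (lam - mu) ^ 2 * m * (m + 1)) /
                       ((2 * lam - mu) * m - mu) ^ 2).
        { unfold Rdiv. apply Rmult_le_pos. apply Rplus_le_le_0_compat. apply Rmult_le_pos; nra.
          apply Rmult_le_pos. apply Rmult_le_pos. apply pow2_ge_0. lra. lra.
          left. apply Rinv_0_lt_compat. apply pow_lt. nra. }
        pose proof exp_half_le as He.
        assert (Hnum : (20 / 19) ^ 10 <= 16709 / 10000) by (simpl; lra).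
        nra.
Qed.
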